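(* Let $m\ge 0$ and $k\ge 1$ be integers such that $f=2^{m+k+1}+2^k-1$ is prime, and put $a=2^{m+k}f$ and $b=2^m f$. Let $x,y$ be positive integers with $(x-b)(y-b)=b^2$ such that $p=x-1$, $q=y-1$, $r=xy-1$ are primes, $p\neq q$, and none of $p,q,r$ divides $a$ (in particular none equals $f$ or $2$). Then $apq$ and $ar$ are amicable numbers.
   Context: For a positive integer $N$, $\sigma(N)$ denotes the sum of all positive divisors of $N$. Positive integers $M,N$ are amicable if $\sigma(M)-M=N$ and $\sigma(N)-N=M$. *)

(* Defs.v *)
From mathcomp Require Import all_boot all_order all_algebra.
Set Implicit Arguments. Unset Strict Implicit. Unset Printing Implicit Defensive.

Definition sigma (N : nat) : nat := \sum_(d <- divisors N) d.

Definition amicable (M N : nat) : Prop :=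
  0 < M /\ 0 < N /\ sigma M - M = N /\ sigma N - N = M.

(* Main.v *)
Require Import Defs.
From mathcomp Require Import all_boot all_order all_algebra.
From mathcomp Require Import zify ring.

Lemma sigma_perm n s : 0 < n -> uniq s -> (forall d, (d \in s) = (d %| n)) ->
  sigma n = \sum_(d <- s) d.
Proof.
move=> n0 us hs; rewrite /sigma; apply: perm_big; apply: uniq_perm => //.
  exact: divisors_uniq.
by move=> d; rewrite hs -dvdn_divisors.
Qed.

Lemma sigma_mulp n p : 0 < n -> prime p -> ~~ (p %| n) -> sigma (n * p) = sigma n * p.+1.
Proof.
move=> n0 pp pn.
have p0 := prime_gt0 pp.
rewrite (@sigma_perm (n * p) (divisors n ++ map (muln^~ p) (divisors n))).
- rewrite big_cat big_map /= -big_distrl /= /sigma; lia.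
- by rewrite muln_gt0 n0.
- rewrite cat_uniq divisors_uniq map_inj_uniq ?divisors_uniq ?andbT /=.
    apply/hasPn => z /mapP [d _ ->]; rewrite -dvdn_divisors //.
    apply/negP => /(dvdn_trans (dvdn_mull d (dvdnn p))); by rewrite (negbTE pn).
  by move=> u v /eqP; rewrite eqn_pmul2r // => /eqP.
- move=> d; rewrite mem_cat; apply/idP/idP.
    case/orP => [|/mapP [e]]; first by rewrite -dvdn_divisors // => /dvdn_mulr.
    by rewrite -dvdn_divisors // => he ->; rewrite dvdn_pmul2r.
  move=> hd; case: (boolP (p %| d)) => hpd.
    apply/orP; right; apply/mapP; exists (d %/ p); last by rewrite divnK.
    rewrite -dvdn_divisors //; move: hd; rewrite -{1}(divnK hpd) dvdn_pmul2r //.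
  apply/orP; left; rewrite -dvdn_divisors //.
  have cp : coprime d p by rewrite coprime_sym prime_coprime.
  by rewrite (Gauss_dvdl _ cp) in hd.
Qed.

Lemma sigma_2pow e : (sigma (2 ^ e)).+1 = 2 ^ e.+1.
Proof.
rewrite (@sigma_perm (2 ^ e) (map (expn 2) (iota 0 e.+1))).
- rewrite big_map; change (iota 0 e.+1) with (index_iota 0 e.+1); rewrite big_mkord.
  elim: e => [|e IH]; first by rewrite big_ord1.
  by rewrite big_ord_recr /= -addSn IH [2 ^ e.+2]expnS mul2n addnn.
- by rewrite expn_gt0.
- by rewrite map_inj_uniq ?iota_uniq //; apply: expnI.
- move=> d; apply/mapP/idP.
    by case=> i; rewrite mem_iota => /andP[_ hi] ->; apply: dvdn_exp2l.
  by case/(dvdn_pfactor _ _ (isT : prime 2)) => i hi ->; exists i; rewrite // mem_iota.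
Qed.
Lemma pow2_ge2 k : 1 <= k -> exists v', 2 ^ k = v'.+2.
Proof.
move=> k1; exists (2 ^ k - 2); have : 2 ^ 1 <= 2 ^ k by rewrite leq_exp2l.
rewrite expn1; move: (2 ^ k) => n; lia.
Qed.

Lemma f_form m k u' v' : 2 ^ m = u'.+1 -> 2 ^ k = v'.+2 ->
  2 ^ (m + k + 1) + 2 ^ k - 1 = 2 * u'.+1 * v'.+2 + v'.+1.
Proof.
move=> hu hv; rewrite addn1 expnS expnD hu hv; lia.
Qed.

Lemma int_hyp x y b : ((x%:Z - b%:Z) * (y%:Z - b%:Z) = (b%:Z) ^+ 2)%R -> x * y = b * (x + y).
Proof.
move=> H; apply/eqP; rewrite -eqz_nat; apply/eqP; rewrite !PoszM PoszD.
have E : ((x%:Z * y%:Z) - b%:Z * (x%:Z + y%:Z) = (x%:Z - b%:Z) * (y%:Z - b%:Z) - b%:Z ^+ 2)%R by ring.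
move: E; rewrite H GRing.subrr => /eqP; by rewrite GRing.subr_eq0 => /eqP.
Qed.
Lemma arith u' v' x' y' S f : S.+1 = 2 * (u'.+1 * v'.+2) ->
  f = 2 * u'.+1 * v'.+2 + v'.+1 ->
  x'.+1 * y'.+1 = u'.+1 * f * (x'.+1 + y'.+1) ->
  S * f.+1 * x'.+1 * y'.+1 = u'.+1 * v'.+2 * f * (x' * y') + u'.+1 * v'.+2 * f * (x' * y' + x' + y').
Proof.
move=> hS hf H.
have -> : S = 2 * u' * v' + 4 * u' + 2 * v' + 3 by lia.
have Hv := congr1 (muln v'.+2) H.
apply: (@addIn (v'.+2 * (x'.+1 * y'.+1))).
rewrite [in RHS]Hv; subst f; ring.
Qed.

Theorem mainTheorem6 (m k x y : nat) :
  1 <= k ->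
  let f := 2 ^ (m + k + 1) + 2 ^ k - 1 in
  prime f ->
  let a := 2 ^ (m + k) * f in
  let b := 2 ^ m * f in
  0 < x -> 0 < y ->
  ((x%:Z - b%:Z) * (y%:Z - b%:Z) = (b%:Z) ^+ 2)%R ->
  prime (x - 1) -> prime (y - 1) -> prime (x * y - 1) ->
  x - 1 <> y - 1 ->
  ~~ (x - 1 %| a) -> ~~ (y - 1 %| a) -> ~~ (x * y - 1 %| a) ->
  amicable (a * (x - 1) * (y - 1)) (a * (x * y - 1)).
Proof.
move=> k1 f pf a b x0 y0 H px py pr pq npa nqa nra.
have [u' hu] : exists u', 2 ^ m = u'.+1 by exists (2 ^ m).-1; rewrite prednK // expn_gt0.
have [v' hv] := @pow2_ge2 k k1.
have e3 : 2 ^ (m + k) = u'.+1 * v'.+2 by rewrite expnD hu hv.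
have e2 : f = 2 * u'.+1 * v'.+2 + v'.+1 by rewrite /f (@f_form m k u' v' hu hv).
have f2 : ~~ (f %| 2 ^ (m + k)).
  rewrite Euclid_dvdX //; apply/negP => /andP [/dvdn_leq h _].
  move: (h isT); rewrite e2; clear; lia.
have hS := sigma_2pow (m + k); rewrite expnS e3 in hS.
have sa : sigma a = sigma (2 ^ (m + k)) * f.+1.
  by rewrite /a sigma_mulp // expn_gt0.
have a0 : 0 < a by rewrite /a muln_gt0 expn_gt0 (prime_gt0 pf).
have nqa' : ~~ (y - 1 %| a * (x - 1)).
  by rewrite Euclid_dvdM // negb_or nqa /= dvdn_prime2 //; apply/eqP => /esym.
have s1 : sigma (a * (x - 1) * (y - 1)) = sigma a * (x - 1).+1 * (y - 1).+1.
  have ax0 : 0 < a * (x - 1) by rewrite muln_gt0 a0 (prime_gt0 px).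
  by rewrite (@sigma_mulp (a * (x - 1)) (y - 1)) // (@sigma_mulp a (x - 1)).
have s2 : sigma (a * (x * y - 1)) = sigma a * (x * y - 1).+1.
  by rewrite sigma_mulp.
have Hn := @int_hyp _ _ _ H.
have x2 : 2 <= x - 1 by apply: prime_gt1.
have y2 : 2 <= y - 1 by apply: prime_gt1.
rewrite e3 in sa; rewrite /amicable s1 s2 sa.
rewrite /b hu in Hn; rewrite /a e3.
move: (sigma (u'.+1 * v'.+2)) hS => S hS.
clearbody f.
clear -e2 hS x2 y2 x0 y0 Hn.
case: x x0 x2 Hn => // x' _ x2; case: y y0 y2 => // y' _ y2.
rewrite !subn1 /= in x2 y2.
move=> Hn; have E := @arith _ _ _ _ _ _ hS e2 Hn.
have P0 : 0 < u'.+1 * v'.+2 * f by rewrite e2 !muln_gt0.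
move: E P0; move: (u'.+1 * v'.+2 * f) => A E P0.
have R : x'.+1 * y'.+1 - 1 = x' * y' + x' + y' by clear; rewrite mulSn mulnS; lia.
have XY : (x' * y' + x' + y').+1 = x'.+1 * y'.+1 by clear; rewrite mulSn mulnS; lia.
rewrite R !subn1 /= XY.
have p1 : 0 < A * x' * y' by rewrite !muln_gt0 P0 (leq_trans _ x2) ?(leq_trans _ y2).
have p2 : 0 < A * (x' * y' + x' + y') by rewrite !muln_gt0 P0 !addn_gt0 (leq_trans _ x2) ?orbT.
split => //; split => //.
rewrite !mulnA E -!mulnA addKn addnK; split => //.
Qed.
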